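(* In the on-policy TD$(n)$ setting of the context, suppose $\epsilon_k\equiv\epsilon\le\frac{1-\beta^n}{16(1+\beta^{2n})}$. Then for all $k\ge0$, $$\mathbb{E}[\|V_k-V_\pi\|_\Lambda^2]\le\|V_0-V_\pi\|_\Lambda^2(1-(1-\beta^n)\epsilon)^k+\frac{8}{1-\beta^n}\left(\frac{(1-\beta^n)^2}{(1-\beta)^2}+2\beta^{2n}\|V_\pi\|_\Lambda^2\right)\epsilon.$$
   Context: Finite MDP: finite state space $\mathcal S$, finite action space $\mathcal A$, transition matrices $P_a$, reward $\mathcal R:\mathcal S\times\mathcal A\to[0,1]$, discount $\beta\in(0,1)$. Fix a policy $\pi$ with value function $V_\pi(s)=\mathbb{E}_\pi[\sum_{k\ge0}\beta^k\mathcal R(S_k,A_k)\mid S_0=s]$, and assume the Markov chain $\{S_k\}$ under $\pi$ has a unique stationary distribution $\lambda$ with $\lambda(s)>0$ for all $s$. Let $\Lambda=\mathrm{diag}(\lambda)$ and $\|V\|_\Lambda=(V^\top\Lambda V)^{1/2}$. Fix $n\ge1$. TD$(n)$: from deterministic $V_0$, at each iteration $k$ and for each $s$, a fresh trajectory $S_0^s=s,A_0^s,\dots,S_n^s$ is sampled under $\pi$ (independently of the past given the current iterate), and $V_{k+1}(s)=V_k(s)+\epsilon_k(\sum_{t=0}^{n-1}\beta^t\mathcal R(S_t^s,A_t^s)+\beta^nV_k(S_n^s)-V_k(s))$. *)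

(* Defs.v *)
From Stdlib Require Import Reals List.
Import ListNotations.
Open Scope R_scope.

(* States are 0..nS-1, actions are 0..nA-1. *)

Definition fsum (m : nat) (f : nat -> R) : R :=
  fold_right Rplus 0 (map f (seq 0 m)).

Definition lsum (l : list R) : R := fold_right Rplus 0 l.

Fixpoint allseqs {X : Type} (m : nat) (xs : list X) : list (list X) :=
  match m with
  | O => [[]]
  | S m' => flat_map (fun x => map (cons x) (allseqs m' xs)) xs
  end.

(* A trajectory from a start state: list of (action taken, next state) pairs.
   [(a0,s1);(a1,s2);...;(a_{m-1},s_m)] *)
Definition traj := list (nat * nat).

Definition trajs (nS nA m : nat) : list traj :=
  allseqs m (list_prod (seq 0 nA) (seq 0 nS)).

(* probability of a trajectory started at s under policy pi and kernel P
   (P a s s' = probability of moving s -> s' under action a) *)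
Fixpoint traj_prob (P : nat -> nat -> nat -> R) (pi : nat -> nat -> R)
    (s : nat) (tr : traj) : R :=
  match tr with
  | [] => 1
  | (a, s') :: tr' => pi s a * P a s s' * traj_prob P pi s' tr'
  end.

(* discounted return along the trajectory, bootstrapped with V at the end:
   sum_{t<m} beta^t R(S_t,A_t) + beta^m V(S_m) *)
Fixpoint traj_ret (Rw : nat -> nat -> R) (beta : R) (V : nat -> R)
    (s : nat) (tr : traj) : R :=
  match tr with
  | [] => V s
  | (a, s') :: tr' => Rw s a + beta * traj_ret Rw beta V s' tr'
  end.

Definition vN (nS nA : nat) (P : nat -> nat -> nat -> R) (pi : nat -> nat -> R)
    (Rw : nat -> nat -> R) (beta : R) (N : nat) (s : nat) : R :=
  lsum (map (fun tr => traj_prob P pi s tr * traj_ret Rw beta (fun _ => 0) s tr)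
            (trajs nS nA N)).

Definition Ppi (nA : nat) (P : nat -> nat -> nat -> R) (pi : nat -> nat -> R)
    (s s' : nat) : R :=
  fsum nA (fun a => pi s a * P a s s').

(* squared weighted norm ||V||_Lambda^2 = sum_s lambda(s) V(s)^2 *)
Definition normL2 (nS : nat) (lam : nat -> R) (V : nat -> R) : R :=
  fsum nS (fun s => lam s * V s ^ 2).

(* One joint sample of an iteration: one trajectory of length n per state,
   sampled independently (the trajectory for state s is nth s w []). *)
Definition joint_samples (nS nA n : nat) : list (list traj) :=
  allseqs nS (trajs nS nA n).

Definition joint_prob (nS : nat) (P : nat -> nat -> nat -> R)
    (pi : nat -> nat -> R) (w : list traj) : R :=
  fold_right Rmult 1 (map (fun s => traj_prob P pi s (nth s w [])) (seq 0 nS)).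

Definition td_update (Rw : nat -> nat -> R) (beta eps : R) (V : nat -> R)
    (w : list traj) : nat -> R :=
  fun s => V s + eps * (traj_ret Rw beta V s (nth s w []) - V s).

(* ExpTD k g V0 = E[ g(V_k) ] where V_k is the k-th TD(n) iterate (constant
   step size eps, fresh independent samples at every iteration) from V0. *)
Fixpoint ExpTD (nS nA n : nat) (P : nat -> nat -> nat -> R)
    (pi : nat -> nat -> R) (Rw : nat -> nat -> R) (beta eps : R)
    (k : nat) (g : (nat -> R) -> R) (V : nat -> R) : R :=
  match k with
  | O => g V
  | S k' =>
      lsum (map (fun w => joint_prob nS P pi w *
                   ExpTD nS nA n P pi Rw beta eps k' g (td_update Rw beta eps V w))
                (joint_samples nS nA n))
  end.

(* Main.v *)
Require Import Defs.
From Stdlib Require Import Reals List Lra Lia Psatz.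
Import ListNotations.
Open Scope R_scope.

Lemma lsum_cons a l : lsum (a :: l) = a + lsum l.
Proof. reflexivity. Qed.
Lemma lsum_nil : lsum [] = 0.
Proof. reflexivity. Qed.
Lemma fsum_lsum m f : fsum m f = lsum (map f (seq 0 m)).
Proof. reflexivity. Qed.

Lemma lsum_map_plus {A} (f g : A -> R) l :
  lsum (map (fun x => f x + g x) l) = lsum (map f l) + lsum (map g l).
Proof. induction l; simpl; rewrite ?lsum_cons, ?lsum_nil; [lra|rewrite IHl; ring]. Qed.

Lemma lsum_map_scal {A} (f : A -> R) c l :
  lsum (map (fun x => c * f x) l) = c * lsum (map f l).
Proof. induction l; simpl; rewrite ?lsum_cons, ?lsum_nil; [ring|rewrite IHl; ring]. Qed.

Lemma lsum_map_ext_in {A} (f g : A -> R) l :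
  (forall x, In x l -> f x = g x) -> lsum (map f l) = lsum (map g l).
Proof. intro H; rewrite (map_ext_in _ _ _ H); reflexivity. Qed.

Lemma lsum_map_le {A} (f g : A -> R) l :
  (forall x, In x l -> f x <= g x) -> lsum (map f l) <= lsum (map g l).
Proof.
  induction l; simpl; intro H; rewrite ?lsum_cons, ?lsum_nil; [lra|].
  apply Rplus_le_compat; auto.
Qed.

Lemma lsum_app l1 l2 : lsum (l1 ++ l2) = lsum l1 + lsum l2.
Proof. induction l1; simpl; rewrite ?lsum_cons, ?lsum_nil; [ring|rewrite IHl1; ring]. Qed.

Lemma lsum_map_zero {A} (l : list A) : lsum (map (fun _ => 0) l) = 0.
Proof. induction l; simpl; rewrite ?lsum_cons, ?lsum_nil; [ring|rewrite IHl; ring]. Qed.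

Lemma lsum_flat_map {A B} (F : B -> R) (g : A -> list B) L :
  lsum (map F (flat_map g L)) = lsum (map (fun x => lsum (map F (g x))) L).
Proof. induction L; cbn [map flat_map]; [reflexivity|]. rewrite map_app, lsum_app, lsum_cons, IHL; reflexivity. Qed.

Lemma lsum_list_prod {A B} (H : A * B -> R) LA LB :
  lsum (map H (list_prod LA LB)) = lsum (map (fun a => lsum (map (fun b => H (a,b)) LB)) LA).
Proof. induction LA; cbn [map list_prod]; [reflexivity|]. rewrite map_app, lsum_app, lsum_cons, IHLA, map_map; reflexivity. Qed.

Lemma lsum_swap {A B} (f : A -> B -> R) L1 L2 :
  lsum (map (fun i => lsum (map (fun j => f i j) L2)) L1)
  = lsum (map (fun j => lsum (map (fun i => f i j) L1)) L2).
Proof.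
  induction L1; cbn [map].
  - rewrite lsum_nil, lsum_map_zero; reflexivity.
  - rewrite lsum_cons, IHL1, <- lsum_map_plus. reflexivity.
Qed.

Lemma fsum_ext_lt m f g : (forall i, (i < m)%nat -> f i = g i) -> fsum m f = fsum m g.
Proof.
  intro H; rewrite !fsum_lsum; apply lsum_map_ext_in; intros x Hx.
  apply in_seq in Hx; apply H; lia.
Qed.

Lemma fsum_le_lt m f g : (forall i, (i < m)%nat -> f i <= g i) -> fsum m f <= fsum m g.
Proof.
  intro H; rewrite !fsum_lsum; apply lsum_map_le; intros x Hx.
  apply in_seq in Hx; apply H; lia.
Qed.

Lemma fsum_plus m f g : fsum m (fun i => f i + g i) = fsum m f + fsum m g.
Proof. rewrite !fsum_lsum; apply lsum_map_plus. Qed.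
Lemma fsum_scal m f c : fsum m (fun i => c * f i) = c * fsum m f.
Proof. rewrite !fsum_lsum; apply lsum_map_scal. Qed.
Lemma fsum_swap m k (f : nat -> nat -> R) :
  fsum m (fun i => fsum k (fun j => f i j)) = fsum k (fun j => fsum m (fun i => f i j)).
Proof. exact (lsum_swap f (seq 0 m) (seq 0 k)). Qed.

Lemma in_allseqs {X} m (xs : list X) tr :
  In tr (allseqs m xs) -> length tr = m /\ Forall (fun x => In x xs) tr.
Proof.
  revert tr; induction m; intros tr H; simpl in H.
  - destruct H as [<-|[]]; split; auto.
  - apply in_flat_map in H as [x [Hx H]]. apply in_map_iff in H as [t [<- Ht]].
    destruct (IHm t Ht); simpl; split; auto.
Qed.
Section TD.
Variables (nS nA : nat) (P : nat -> nat -> nat -> R) (pi : nat -> nat -> R)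
  (Rw : nat -> nat -> R) (beta : R).
Hypothesis HP0 : forall a s s', (a < nA)%nat -> (s < nS)%nat -> (s' < nS)%nat -> 0 <= P a s s'.
Hypothesis HP1 : forall a s, (a < nA)%nat -> (s < nS)%nat -> fsum nS (fun s' => P a s s') = 1.
Hypothesis HR : forall s a, (s < nS)%nat -> (a < nA)%nat -> 0 <= Rw s a <= 1.
Hypothesis Hbeta : 0 < beta < 1.
Hypothesis Hpi0 : forall s a, (s < nS)%nat -> (a < nA)%nat -> 0 <= pi s a.
Hypothesis Hpi1 : forall s, (s < nS)%nat -> fsum nA (fun a => pi s a) = 1.

Definition Ex (n s : nat) (h : traj -> R) : R :=
  lsum (map (fun tr => traj_prob P pi s tr * h tr) (trajs nS nA n)).

Definition ok (p : nat * nat) : Prop := (fst p < nA)%nat /\ (snd p < nS)%nat.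

Fixpoint tend (s : nat) (tr : traj) : nat :=
  match tr with [] => s | (_, s') :: tr' => tend s' tr' end.

Lemma in_trajs n tr : In tr (trajs nS nA n) -> length tr = n /\ Forall ok tr.
Proof.
  intro H; apply in_allseqs in H as [H1 H2]; split; auto.
  eapply Forall_impl; [|exact H2]. intros [a s'] Hin.
  apply in_prod_iff in Hin as [Ha Hs]; apply in_seq in Ha; apply in_seq in Hs.
  unfold ok; simpl; lia.
Qed.

Lemma Ex_ext_in n s h h' :
  (forall tr, length tr = n -> Forall ok tr -> h tr = h' tr) -> Ex n s h = Ex n s h'.
Proof.
  intro H; unfold Ex; apply lsum_map_ext_in; intros tr Htr.
  apply in_trajs in Htr as [H1 H2]; rewrite H; auto.
Qed.

Lemma traj_prob_nonneg s tr : (s < nS)%nat -> Forall ok tr -> 0 <= traj_prob P pi s tr.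
Proof.
  revert s; induction tr as [|[a s'] tr IH]; intros s Hs Hf; simpl; [lra|].
  inversion Hf as [|? ? [Ha Hs'] Hf']; subst; simpl in *.
  apply Rmult_le_pos; [apply Rmult_le_pos|]; auto.
Qed.

Lemma tend_lt s tr : (s < nS)%nat -> Forall ok tr -> (tend s tr < nS)%nat.
Proof.
  revert s; induction tr as [|[a s'] tr IH]; intros s Hs Hf; simpl; auto.
  inversion Hf as [|? ? [Ha Hs'] Hf']; subst; simpl in *; auto.
Qed.

Lemma Ex_mono n s h h' : (s < nS)%nat ->
  (forall tr, length tr = n -> Forall ok tr -> h tr <= h' tr) -> Ex n s h <= Ex n s h'.
Proof.
  intros Hs H; unfold Ex; apply lsum_map_le; intros tr Htr.
  apply in_trajs in Htr as [H1 H2]; apply Rmult_le_compat_l; auto.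
  apply traj_prob_nonneg; auto.
Qed.

Lemma Ex_plus n s f g : Ex n s (fun tr => f tr + g tr) = Ex n s f + Ex n s g.
Proof.
  unfold Ex; rewrite <- lsum_map_plus; f_equal; apply map_ext; intro; ring.
Qed.

Lemma Ex_scal n s f c : Ex n s (fun tr => c * f tr) = c * Ex n s f.
Proof.
  unfold Ex; rewrite <- lsum_map_scal; f_equal; apply map_ext; intro; ring.
Qed.

Lemma Ex_0 s h : Ex 0 s h = h [].
Proof. unfold Ex, trajs; simpl allseqs; cbn [map traj_prob]; rewrite lsum_cons, lsum_nil; ring. Qed.

Lemma Ex_S n s h : Ex (S n) s h =
  fsum nA (fun a => fsum nS (fun s' => pi s a * P a s s' * Ex n s' (fun tr => h ((a, s') :: tr)))).
Proof.
  unfold Ex at 1.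
  change (trajs nS nA (S n)) with
    (flat_map (fun x => map (cons x) (trajs nS nA n)) (list_prod (seq 0 nA) (seq 0 nS))).
  rewrite lsum_flat_map, lsum_list_prod, fsum_lsum. f_equal; apply map_ext; intro a.
  rewrite fsum_lsum; f_equal; apply map_ext; intro s'.
  rewrite map_map; unfold Ex; rewrite <- lsum_map_scal; f_equal; apply map_ext; intro tr.
  simpl; ring.
Qed.

Lemma Ex_const n s c : (s < nS)%nat -> Ex n s (fun _ => c) = c.
Proof.
  revert s; induction n; intros s Hs; [rewrite Ex_0; reflexivity|].
  rewrite Ex_S.
  transitivity (fsum nA (fun a => (c * pi s a) * fsum nS (fun s' => P a s s'))).
  - apply fsum_ext_lt; intros a Ha. rewrite <- fsum_scal. apply fsum_ext_lt; intros s' Hs'.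
    rewrite IHn; auto; ring.
  - transitivity (fsum nA (fun a => c * pi s a)).
    + apply fsum_ext_lt; intros a Ha; rewrite HP1; auto; ring.
    + rewrite fsum_scal, Hpi1; auto; ring.
Qed.

Lemma Ex_ext n s h h' : (forall tr, h tr = h' tr) -> Ex n s h = Ex n s h'.
Proof. intro H; unfold Ex; f_equal; apply map_ext; intro; rewrite H; auto. Qed.

Lemma ret_split V s tr :
  traj_ret Rw beta V s tr = traj_ret Rw beta (fun _ => 0) s tr + beta ^ (length tr) * V (tend s tr).
Proof.
  revert s; induction tr as [|[a s'] tr IH]; intros s; simpl; [ring|].
  rewrite IH; ring.
Qed.

Lemma r0_bound s tr : (s < nS)%nat -> Forall ok tr ->
  0 <= traj_ret Rw beta (fun _ => 0) s tr <= (1 - beta ^ (length tr)) / (1 - beta).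
Proof.
  revert s; induction tr as [|[a s'] tr IH]; intros s Hs Hf; simpl.
  - replace ((1 - 1) / (1 - beta)) with 0 by (field; lra). lra.
  - inversion Hf as [|? ? [Ha Hs'] Hf']; subst; simpl in *.
    destruct (IH s' Hs' Hf') as [I1 I2]. destruct (HR s a Hs Ha) as [R1 R2].
    split; [nra|].
    replace ((1 - beta * beta ^ length tr) / (1 - beta)) with
      (1 + beta * ((1 - beta ^ length tr) / (1 - beta))) by (field; lra).
    nra.
Qed.

Lemma Ex_stat lam
  (Hstat : forall s', (s' < nS)%nat -> lam s' = fsum nS (fun s => lam s * Ppi nA P pi s s'))
  n g : fsum nS (fun s => lam s * Ex n s (fun tr => g (tend s tr))) = fsum nS (fun s => lam s * g s).
Proof.
  induction n.
  - apply fsum_ext_lt; intros s _; rewrite Ex_0; reflexivity.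
  - rewrite <- IHn.
    set (E' := fun s' => Ex n s' (fun tr => g (tend s' tr))).
    transitivity (fsum nS (fun s => fsum nS (fun s' => fsum nA (fun a => lam s * (pi s a * P a s s') * E' s')))).
    + apply fsum_ext_lt; intros s Hs. rewrite Ex_S, <- fsum_scal.
      transitivity (fsum nA (fun a => fsum nS (fun s' => lam s * (pi s a * P a s s') * E' s'))).
      * apply fsum_ext_lt; intros a Ha. rewrite <- fsum_scal. apply fsum_ext_lt; intros s' Hs'.
        unfold E'. rewrite (Ex_ext n s' _ (fun tr => g (tend s' tr))) by reflexivity. ring.
      * apply fsum_swap.
    + rewrite fsum_swap. apply fsum_ext_lt; intros s' Hs'.
      rewrite (Hstat s' Hs'), Rmult_comm, <- fsum_scal.
      apply fsum_ext_lt; intros s Hs. unfold Ppi. rewrite <- !fsum_scal.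
      apply fsum_ext_lt; intros a Ha. unfold E'. ring.
Qed.

Lemma vN_split n N s : (s < nS)%nat ->
  vN nS nA P pi Rw beta (n + N) s = Ex n s (fun tr => traj_ret Rw beta (vN nS nA P pi Rw beta N) s tr).
Proof.
  revert s; induction n; intros s Hs.
  - rewrite Ex_0; reflexivity.
  - change (vN nS nA P pi Rw beta (S n + N) s) with
      (Ex (S (n + N)) s (fun tr => traj_ret Rw beta (fun _ => 0) s tr)).
    rewrite !Ex_S. apply fsum_ext_lt; intros a Ha. apply fsum_ext_lt; intros s' Hs'.
    f_equal. cbn [traj_ret].
    rewrite !Ex_plus, !Ex_scal, !Ex_const by auto. f_equal. f_equal.
    rewrite <- IHn by auto. reflexivity.
Qed.

Lemma Un_cv_ext u v l : Un_cv u l -> (forall N, u N = v N) -> Un_cv v l.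
Proof. intros H E e He; destruct (H e He) as [N HN]; exists N; intros; rewrite <- E; auto. Qed.

Lemma Un_cv_const c : Un_cv (fun _ => c) c.
Proof. intros e He; exists 0%nat; intros; unfold R_dist; rewrite Rminus_diag, Rabs_R0; auto. Qed.

Lemma Un_cv_affine u l a b : Un_cv u l -> Un_cv (fun N => a + b * u N) (a + b * l).
Proof.
  intro H. apply CV_plus; [apply Un_cv_const|]. apply CV_mult; [apply Un_cv_const|auto].
Qed.

Lemma lsum_cv {A} (l : list A) (f : nat -> A -> R) g :
  (forall x, In x l -> Un_cv (fun N => f N x) (g x)) ->
  Un_cv (fun N => lsum (map (f N) l)) (lsum (map g l)).
Proof.
  induction l; intro H; cbn [map].
  - apply Un_cv_const.
  - apply (CV_plus (fun N => f N a) (fun N => lsum (map (f N) l))); auto.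
    apply H; left; auto. apply IHl; intros; apply H; right; auto.
Qed.

Lemma Vpi_bellman Vpi
  (HVpi : forall s, (s < nS)%nat -> Un_cv (fun N => vN nS nA P pi Rw beta N s) (Vpi s))
  n s : (s < nS)%nat -> Vpi s = Ex n s (fun tr => traj_ret Rw beta Vpi s tr).
Proof.
  intro Hs. apply (UL_sequence (fun N => vN nS nA P pi Rw beta (n + N) s)).
  - intros e He; destruct (HVpi s Hs e He) as [N0 HN]; exists N0; intros; apply HN; lia.
  - apply (Un_cv_ext (fun N => Ex n s (fun tr => traj_ret Rw beta (vN nS nA P pi Rw beta N) s tr))).
    2: intros; rewrite vN_split; auto.
    unfold Ex. apply lsum_cv. intros tr Htr. apply in_trajs in Htr as [Hl Hf].
    apply (Un_cv_ext (fun N => 0 + traj_prob P pi s tr * (traj_ret Rw beta (fun _ => 0) s tr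
          + beta ^ length tr * vN nS nA P pi Rw beta N (tend s tr)))).
    2: intros N; rewrite (ret_split (vN nS nA P pi Rw beta N)); ring.
    replace (traj_prob P pi s tr * traj_ret Rw beta Vpi s tr) with
      (0 + traj_prob P pi s tr * (traj_ret Rw beta (fun _ => 0) s tr + beta ^ length tr * Vpi (tend s tr)))
      by (rewrite (ret_split Vpi); ring).
    apply Un_cv_affine. apply Un_cv_affine. apply HVpi, tend_lt; auto.
Qed.

Definition jprod (o m : nat) (w : list traj) : R :=
  fold_right Rmult 1 (map (fun i => traj_prob P pi (o + i) (nth i w [])) (seq 0 m)).

Definition JE (n o m : nat) (H : list traj -> R) : R :=
  lsum (map (fun w => jprod o m w * H w) (allseqs m (trajs nS nA n))).

Lemma jprod_cons o m t w : jprod o (S m) (t :: w) = traj_prob P pi o t * jprod (S o) m w.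
Proof.
  unfold jprod. cbn [seq map fold_right]. rewrite <- seq_shift, map_map, Nat.add_0_r.
  f_equal. f_equal. apply map_ext; intro i. rewrite Nat.add_succ_r. reflexivity.
Qed.

Lemma JE_S n o m H : JE n o (S m) H = Ex n o (fun t => JE n (S o) m (fun w => H (t :: w))).
Proof.
  unfold JE at 1.
  change (allseqs (S m) (trajs nS nA n)) with
    (flat_map (fun x => map (cons x) (allseqs m (trajs nS nA n))) (trajs nS nA n)).
  rewrite lsum_flat_map. unfold Ex. f_equal; apply map_ext; intro t.
  rewrite map_map. unfold JE. rewrite <- lsum_map_scal. f_equal; apply map_ext; intro w.
  rewrite jprod_cons; ring.
Qed.

Lemma JE_0 n o H : JE n o 0 H = H [].
Proof. unfold JE; simpl allseqs; cbn [map]; rewrite lsum_cons, lsum_nil; unfold jprod; simpl; ring. Qed.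

Lemma JE_plus n o m F G : JE n o m (fun w => F w + G w) = JE n o m F + JE n o m G.
Proof. unfold JE; rewrite <- lsum_map_plus; f_equal; apply map_ext; intro; ring. Qed.

Lemma JE_scal n o m F c : JE n o m (fun w => c * F w) = c * JE n o m F.
Proof. unfold JE; rewrite <- lsum_map_scal; f_equal; apply map_ext; intro; ring. Qed.

Lemma JE_ext n o m F G : (forall w, F w = G w) -> JE n o m F = JE n o m G.
Proof. intro E; unfold JE; f_equal; apply map_ext; intro; rewrite E; auto. Qed.

Lemma JE_zero n o m : JE n o m (fun _ => 0) = 0.
Proof.
  rewrite (JE_ext n o m _ (fun w => 0 * 0)) by (intro; ring). rewrite JE_scal; ring.
Qed.

Lemma JE_nonneg n m : forall o H, (o + m <= nS)%nat -> (forall w, 0 <= H w) -> 0 <= JE n o m H.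
Proof.
  induction m; intros o H Ho HH.
  - rewrite JE_0; auto.
  - rewrite JE_S. rewrite <- (Ex_const n o 0) by lia. apply Ex_mono; [lia|].
    intros tr _ _. apply IHm; [lia|auto].
Qed.

Lemma JE_mono n m o F G : (o + m <= nS)%nat -> (forall w, F w <= G w) -> JE n o m F <= JE n o m G.
Proof.
  intros Ho H.
  assert (0 <= JE n o m (fun w => G w + (-1) * F w)).
  { apply JE_nonneg; auto. intro w; specialize (H w); lra. }
  rewrite JE_plus, JE_scal in H0. lra.
Qed.

Lemma JE_const n m : forall o c, (o + m <= nS)%nat -> JE n o m (fun _ => c) = c.
Proof.
  induction m; intros o c Ho.
  - rewrite JE_0; auto.
  - rewrite JE_S. rewrite (Ex_ext n o _ (fun _ => c)) by (intro; apply IHm; lia).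
    apply Ex_const; lia.
Qed.

Lemma JE_marg n m : forall o j q, (o + m <= nS)%nat -> (j < m)%nat ->
  JE n o m (fun w => q (nth j w [])) = Ex n (o + j) q.
Proof.
  induction m; intros o j q Ho Hj; [lia|].
  rewrite JE_S. destruct j as [|j].
  - rewrite Nat.add_0_r. apply Ex_ext; intro t. cbn [nth]. apply JE_const; lia.
  - rewrite (Ex_ext n o _ (fun _ => Ex n (S o + j) q)).
    + rewrite Ex_const by lia. f_equal; lia.
    + intro t. cbn [nth]. apply IHm; lia.
Qed.

Lemma JE_lsum {A} n o m (F : A -> list traj -> R) L :
  JE n o m (fun w => lsum (map (fun x => F x w) L)) = lsum (map (fun x => JE n o m (F x)) L).
Proof.
  induction L; cbn [map].
  - rewrite lsum_nil; apply JE_zero.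
  - rewrite lsum_cons, <- IHL, <- JE_plus. apply JE_ext; intro; rewrite lsum_cons; auto.
Qed.

Lemma ExpTD_S n eps k g V :
  ExpTD nS nA n P pi Rw beta eps (S k) g V
  = JE n 0 nS (fun w => ExpTD nS nA n P pi Rw beta eps k g (td_update Rw beta eps V w)).
Proof. reflexivity. Qed.

Variables (lam Vpi : nat -> R) (n : nat) (eps : R).
Hypothesis HVpi : forall s, (s < nS)%nat -> Un_cv (fun N => vN nS nA P pi Rw beta N s) (Vpi s).
Hypothesis Hlam_pos : forall s, (s < nS)%nat -> 0 < lam s.
Hypothesis Hlam_sum : fsum nS lam = 1.
Hypothesis Hlam_stat : forall s', (s' < nS)%nat ->
      lam s' = fsum nS (fun s => lam s * Ppi nA P pi s s').
Hypothesis Hn : (1 <= n)%nat.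
Hypothesis Heps0 : 0 < eps.
Hypothesis Heps1 : eps <= 1.

Lemma state_bound x s : (s < nS)%nat ->
  Ex n s (fun tr => (x s + eps * (traj_ret Rw beta x s tr - x s) - Vpi s) ^ 2)
  <= ((1 - eps) ^ 2 + (1 - eps) * eps * beta ^ n) * (x s - Vpi s) ^ 2
     + ((1 - eps) * eps * beta ^ n + 5 * eps ^ 2 * (beta ^ n) ^ 2)
         * Ex n s (fun tr => (x (tend s tr) - Vpi (tend s tr)) ^ 2)
     + eps ^ 2 * (2 * ((1 - beta ^ n) / (1 - beta)) ^ 2
                  + 4 * (beta ^ n) ^ 2 * Ex n s (fun tr => Vpi (tend s tr) ^ 2)).
Proof.
  intro Hs.
  set (bn := beta ^ n).
  assert (Hbn : 0 <= bn) by (unfold bn; apply pow_le; lra).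
  set (r := fun tr => traj_ret Rw beta (fun _ => 0) s tr).
  set (G := fun tr => traj_ret Rw beta x s tr).
  set (A := (1 - eps) * x s - Vpi s).
  set (mu := Ex n s G).
  set (M := Ex n s (fun tr => x (tend s tr) - Vpi (tend s tr))).
  set (E2 := Ex n s (fun tr => (x (tend s tr) - Vpi (tend s tr)) ^ 2)).
  set (EV := Ex n s (fun tr => Vpi (tend s tr) ^ 2)).
  set (Kb := (1 - bn) / (1 - beta)).
  set (EG2 := Ex n s (fun tr => G tr ^ 2)).
  assert (Eq : Ex n s (fun tr => (x s + eps * (traj_ret Rw beta x s tr - x s) - Vpi s) ^ 2)
               = A ^ 2 + (2 * A * eps) * mu + eps ^ 2 * EG2).
  { rewrite (Ex_ext n s _ (fun tr => A ^ 2 + ((2 * A * eps) * G tr + eps ^ 2 * G tr ^ 2)))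
      by (intro tr; unfold A, G; ring).
    rewrite Ex_plus, Ex_const, Ex_plus, !Ex_scal by auto. unfold mu, EG2; ring. }
  assert (Emu : mu = Vpi s + bn * M).
  { unfold mu, M. rewrite (Vpi_bellman Vpi HVpi n s Hs).
    rewrite (Ex_ext_in n s G (fun tr => r tr + bn * x (tend s tr)))
      by (intros tr Hl _; unfold G, r, bn; rewrite (ret_split x), Hl; reflexivity).
    assert (E1 : Ex n s (fun tr => traj_ret Rw beta Vpi s tr) = Ex n s (fun tr => r tr + bn * Vpi (tend s tr)))
      by (apply Ex_ext_in; intros tr Hl _; unfold r, bn; rewrite (ret_split Vpi), Hl; reflexivity).
    rewrite E1.
    rewrite (Ex_ext n s (fun tr => x (tend s tr) - Vpi (tend s tr))
               (fun tr => x (tend s tr) + (-1) * Vpi (tend s tr))) by (intro; ring).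
    rewrite !Ex_plus, !Ex_scal. ring. }
  assert (HJ : M ^ 2 <= E2).
  { assert (H0 : 0 <= Ex n s (fun tr => (x (tend s tr) - Vpi (tend s tr) - M) ^ 2)).
    { rewrite <- (Ex_const n s 0) by auto. apply Ex_mono; auto. intros; apply pow2_ge_0. }
    rewrite (Ex_ext n s _ (fun tr => (x (tend s tr) - Vpi (tend s tr)) ^ 2
               + ((-2 * M) * (x (tend s tr) - Vpi (tend s tr)) + M ^ 2))) in H0 by (intro; ring).
    rewrite Ex_plus, Ex_plus, Ex_scal, Ex_const in H0 by auto. fold E2 M in H0. nra. }
  assert (HG2 : EG2 <= 2 * Kb ^ 2 + 4 * bn ^ 2 * EV + 4 * bn ^ 2 * E2).
  { unfold EG2.
    apply Rle_trans with (Ex n s (fun tr => 2 * Kb ^ 2 + (4 * bn ^ 2 * Vpi (tend s tr) ^ 2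
                           + 4 * bn ^ 2 * (x (tend s tr) - Vpi (tend s tr)) ^ 2))).
    - apply Ex_mono; auto. intros tr Hl Hf. unfold G. rewrite (ret_split x), Hl. fold bn.
      destruct (r0_bound s tr Hs Hf) as [R1 R2]. rewrite Hl in R2. fold bn Kb in R2.
      set (rr := traj_ret Rw beta (fun _ => 0) s tr) in *.
      set (V := Vpi (tend s tr)). set (X := x (tend s tr)).
      assert (rr ^ 2 <= Kb ^ 2) by nra.
      assert (h1 : (rr + bn * X) ^ 2 <= 2 * rr ^ 2 + 2 * bn ^ 2 * X ^ 2)
        by (pose proof (pow2_ge_0 (rr - bn * X)); nra).
      assert (h2 : X ^ 2 <= 2 * V ^ 2 + 2 * (X - V) ^ 2)
        by (pose proof (pow2_ge_0 (2 * V - X)); nra).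
      assert (h3 : 0 <= bn ^ 2) by apply pow2_ge_0.
      assert (h4 : bn ^ 2 * X ^ 2 <= bn ^ 2 * (2 * V ^ 2 + 2 * (X - V) ^ 2))
        by (apply Rmult_le_compat_l; auto).
      lra.
    - rewrite Ex_plus, Ex_const, Ex_plus, !Ex_scal by auto. fold EV E2. lra. }
  apply Rle_trans with (A ^ 2 + 2 * A * eps * mu + eps ^ 2 * EG2); [right; exact Eq|].
  assert (He : 0 <= 1 - eps) by lra.
  set (e := x s - Vpi s).
  assert (HA : A + eps * mu = (1 - eps) * e + eps * bn * M) by (unfold A, e; rewrite Emu; ring).
  assert (Hsq : ((1 - eps) * e + eps * bn * M) ^ 2 <=
                (1 - eps) ^ 2 * e ^ 2 + (1 - eps) * eps * bn * (e ^ 2 + M ^ 2) + eps ^ 2 * bn ^ 2 * M ^ 2).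
  { assert (0 <= (1 - eps) * eps * bn) by (apply Rmult_le_pos; [apply Rmult_le_pos|]; lra).
    assert (2 * e * M <= e ^ 2 + M ^ 2) by (pose proof (pow2_ge_0 (e - M)); nra).
    assert ((1 - eps) * eps * bn * (2 * e * M) <= (1 - eps) * eps * bn * (e ^ 2 + M ^ 2))
      by (apply Rmult_le_compat_l; auto).
    nra. }
  assert (Hrest : A ^ 2 + 2 * A * eps * mu + eps ^ 2 * EG2 <= (A + eps * mu) ^ 2 + eps ^ 2 * EG2)
    by nra.
  rewrite HA in Hrest.
  assert (0 <= (1 - eps) * eps * bn) by (apply Rmult_le_pos; [apply Rmult_le_pos|]; lra).
  assert (0 <= eps ^ 2 * bn ^ 2) by nra.
  assert (eps ^ 2 * EG2 <= eps ^ 2 * (2 * Kb ^ 2 + 4 * bn ^ 2 * EV + 4 * bn ^ 2 * E2))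
    by (apply Rmult_le_compat_l; [nra|auto]).
  nra.
Qed.
Lemma JE_fsum n' o m k (F : nat -> list traj -> R) :
  JE n' o m (fun w => fsum k (fun s => F s w)) = fsum k (fun s => JE n' o m (F s)).
Proof. exact (JE_lsum n' o m F (seq 0 k)). Qed.

Lemma fsum_zero k : fsum k (fun _ => 0) = 0.
Proof. rewrite fsum_lsum; apply lsum_map_zero. Qed.

Lemma normL2_nonneg V : 0 <= normL2 nS lam V.
Proof.
  unfold normL2. rewrite <- (fsum_zero nS). apply fsum_le_lt; intros s Hs.
  apply Rmult_le_pos; [apply Rlt_le, Hlam_pos; auto|apply pow2_ge_0].
Qed.

Lemma step_bound x :
  JE n 0 nS (fun w => normL2 nS lam (fun s => td_update Rw beta eps x w s - Vpi s))
  <= ((1 - eps + eps * beta ^ n) ^ 2 + 4 * eps ^ 2 * (beta ^ n) ^ 2) * normL2 nS lam (fun s => x s - Vpi s)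
     + eps ^ 2 * (2 * ((1 - beta ^ n) / (1 - beta)) ^ 2 + 4 * (beta ^ n) ^ 2 * normL2 nS lam Vpi).
Proof.
  set (bn := beta ^ n). set (Kb := (1 - bn) / (1 - beta)).
  set (q := fun s tr => (x s + eps * (traj_ret Rw beta x s tr - x s) - Vpi s) ^ 2).
  set (E2 := fun s => Ex n s (fun tr => (x (tend s tr) - Vpi (tend s tr)) ^ 2)).
  set (EV := fun s => Ex n s (fun tr => Vpi (tend s tr) ^ 2)).
  set (al := (1 - eps) ^ 2 + (1 - eps) * eps * bn).
  set (ga := (1 - eps) * eps * bn + 5 * eps ^ 2 * bn ^ 2).
  apply Rle_trans with (fsum nS (fun s => lam s * Ex n s (q s))).
  { right. unfold normL2.
    rewrite (JE_fsum n 0 nS nS (fun s w => lam s * (td_update Rw beta eps x w s - Vpi s) ^ 2)).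
    apply fsum_ext_lt; intros s Hs. rewrite JE_scal. f_equal.
    apply (JE_marg n nS 0 s (q s)); lia. }
  apply Rle_trans with (fsum nS (fun s => al * (lam s * (x s - Vpi s) ^ 2)
      + (ga * (lam s * E2 s) + ((eps ^ 2 * 2 * Kb ^ 2) * lam s + (eps ^ 2 * 4 * bn ^ 2) * (lam s * EV s))))).
  { apply fsum_le_lt; intros s Hs.
    pose proof (state_bound x s Hs) as H. fold bn Kb in H. unfold q, E2, EV, al, ga.
    pose proof (Hlam_pos s Hs).
    set (Q := Ex n s _) in *.
    apply Rle_trans with (lam s * (((1 - eps) ^ 2 + (1 - eps) * eps * bn) * (x s - Vpi s) ^ 2 +
       ((1 - eps) * eps * bn + 5 * eps ^ 2 * bn ^ 2) * Ex n s (fun tr => (x (tend s tr) - Vpi (tend s tr)) ^ 2) +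
       eps ^ 2 * (2 * Kb ^ 2 + 4 * bn ^ 2 * Ex n s (fun tr => Vpi (tend s tr) ^ 2)))).
    - apply Rmult_le_compat_l; lra.
    - right; ring. }
  rewrite !fsum_plus, !fsum_scal.
  assert (S1 : fsum nS (fun s => lam s * E2 s) = normL2 nS lam (fun s => x s - Vpi s))
    by exact (Ex_stat lam Hlam_stat n (fun s' => (x s' - Vpi s') ^ 2)).
  assert (S2 : fsum nS (fun s => lam s * EV s) = normL2 nS lam Vpi)
    by exact (Ex_stat lam Hlam_stat n (fun s' => Vpi s' ^ 2)).
  assert (S0 : fsum nS (fun s => lam s * (x s - Vpi s) ^ 2) = normL2 nS lam (fun s => x s - Vpi s))
    by reflexivity.
  rewrite S0, S1, S2, Hlam_sum. unfold al, ga. right; ring.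
Qed.
Lemma main_induct rho D :
  0 <= rho ->
  (1 - eps + eps * beta ^ n) ^ 2 + 4 * eps ^ 2 * (beta ^ n) ^ 2 <= rho ->
  eps ^ 2 * (2 * ((1 - beta ^ n) / (1 - beta)) ^ 2 + 4 * (beta ^ n) ^ 2 * normL2 nS lam Vpi)
    = (1 - rho) * D ->
  forall k x, ExpTD nS nA n P pi Rw beta eps k (fun V => normL2 nS lam (fun s => V s - Vpi s)) x
     <= rho ^ k * normL2 nS lam (fun s => x s - Vpi s) + (1 - rho ^ k) * D.
Proof.
  intros Hr Hc HD k; induction k; intro x.
  - cbn [ExpTD]. rewrite pow_O. lra.
  - rewrite ExpTD_S. eapply Rle_trans.
    + apply (JE_mono n nS 0 _ (fun w => rho ^ k * normL2 nS lam (fun s => td_update Rw beta eps x w s - Vpi s)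
              + (1 - rho ^ k) * D)); [lia|]. intro w; apply IHk.
    + rewrite JE_plus, JE_scal, JE_const by lia.
      pose proof (step_bound x) as Hs.
      set (J := JE n 0 nS _) in *.
      set (f := normL2 nS lam (fun s => x s - Vpi s)) in *.
      set (c := (1 - eps + eps * beta ^ n) ^ 2 + 4 * eps ^ 2 * (beta ^ n) ^ 2) in *.
      set (C := eps ^ 2 * _) in *.
      assert (Hf : 0 <= f) by apply normL2_nonneg.
      assert (Hrk : 0 <= rho ^ k) by (apply pow_le; auto).
      assert (J <= rho * f + (1 - rho) * D).
      { apply Rle_trans with (c * f + C); auto. rewrite HD.
        assert (c * f <= rho * f) by (apply Rmult_le_compat_r; auto). lra. }
      assert (rho ^ k * J <= rho ^ k * (rho * f + (1 - rho) * D)) by (apply Rmult_le_compat_l; auto).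
      cbn [pow]. nra.
Qed.

End TD.

Theorem theorem4
  (nS nA : nat) (P : nat -> nat -> nat -> R) (Rw : nat -> nat -> R)
  (beta : R) (pi : nat -> nat -> R) (lam : nat -> R) (Vpi : nat -> R)
  (n : nat) (eps : R) (V0 : nat -> R)
  (HnS : (0 < nS)%nat) (HnA : (0 < nA)%nat)
  (HP0 : forall a s s', (a < nA)%nat -> (s < nS)%nat -> (s' < nS)%nat -> 0 <= P a s s')
  (HP1 : forall a s, (a < nA)%nat -> (s < nS)%nat -> fsum nS (fun s' => P a s s') = 1)
  (HR : forall s a, (s < nS)%nat -> (a < nA)%nat -> 0 <= Rw s a <= 1)
  (Hbeta : 0 < beta < 1)
  (Hpi0 : forall s a, (s < nS)%nat -> (a < nA)%nat -> 0 <= pi s a)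
  (Hpi1 : forall s, (s < nS)%nat -> fsum nA (fun a => pi s a) = 1)
  (Hlam_pos : forall s, (s < nS)%nat -> 0 < lam s)
  (Hlam_sum : fsum nS lam = 1)
  (Hlam_stat : forall s', (s' < nS)%nat ->
      lam s' = fsum nS (fun s => lam s * Ppi nA P pi s s'))
  (Hlam_uniq : forall mu : nat -> R,
      (forall s, (s < nS)%nat -> 0 <= mu s) -> fsum nS mu = 1 ->
      (forall s', (s' < nS)%nat -> mu s' = fsum nS (fun s => mu s * Ppi nA P pi s s')) ->
      forall s, (s < nS)%nat -> mu s = lam s)
  (HVpi : forall s, (s < nS)%nat -> Un_cv (fun N => vN nS nA P pi Rw beta N s) (Vpi s))
  (Hn : (1 <= n)%nat)
  (Heps0 : 0 < eps)
  (Heps : eps <= (1 - beta ^ n) / (16 * (1 + beta ^ (2 * n)))) :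
  forall k : nat,
    ExpTD nS nA n P pi Rw beta eps k
      (fun V => normL2 nS lam (fun s => V s - Vpi s)) V0
    <= normL2 nS lam (fun s => V0 s - Vpi s) * (1 - (1 - beta ^ n) * eps) ^ k
       + 8 / (1 - beta ^ n)
         * ((1 - beta ^ n) ^ 2 / (1 - beta) ^ 2 + 2 * beta ^ (2 * n) * normL2 nS lam Vpi)
         * eps.
Proof.
  intro k.
  assert (Hb2 : beta ^ (2 * n) = (beta ^ n) ^ 2) by (rewrite Nat.mul_comm, pow_mult; reflexivity).
  rewrite Hb2 in *.
  assert (Hbn : 0 < beta ^ n < 1).
  { split; [apply pow_lt; lra|]. apply pow_lt_1_compat; [lra|lia]. }
  set (bn := beta ^ n) in *.
  set (N2 := normL2 nS lam Vpi).
  assert (HN2 : 0 <= N2).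
  { unfold N2, normL2. rewrite <- (fsum_zero nS). apply fsum_le_lt; intros s Hs.
    apply Rmult_le_pos; [apply Rlt_le, Hlam_pos; auto|apply pow2_ge_0]. }
  assert (H16 : 16 * (1 + bn ^ 2) * eps <= 1 - bn).
  { assert (0 < 16 * (1 + bn ^ 2)) by nra.
    apply Rle_trans with (16 * (1 + bn ^ 2) * ((1 - bn) / (16 * (1 + bn ^ 2)))).
    - apply Rmult_le_compat_l; lra.
    - right; field; lra. }
  assert (Heps1 : eps <= 1) by nra.
  set (Kb := (1 - bn) / (1 - beta)).
  set (C := 2 * Kb ^ 2 + 4 * bn ^ 2 * N2).
  set (rho := 1 - (1 - bn) * eps).
  set (D := C * eps / (1 - bn)).
  assert (Hrho : 15 / 16 <= rho) by (unfold rho; nra).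
  assert (HC : 0 <= C) by (unfold C; nra).
  assert (HD0 : 0 <= D) by (unfold D; apply Rmult_le_pos; [nra|apply Rlt_le, Rinv_0_lt_compat; lra]).
  assert (Hc : (1 - eps + eps * bn) ^ 2 + 4 * eps ^ 2 * bn ^ 2 <= rho).
  { replace (1 - eps + eps * bn) with rho by (unfold rho; ring).
    assert (16 * bn ^ 2 * eps <= 1 - bn) by nra.
    assert (4 * eps * bn ^ 2 <= rho * (1 - bn)) by nra.
    assert (eps * (4 * eps * bn ^ 2) <= eps * (rho * (1 - bn))) by (apply Rmult_le_compat_l; lra).
    unfold rho in *. nra. }
  assert (HD : eps ^ 2 * (2 * Kb ^ 2 + 4 * bn ^ 2 * N2) = (1 - rho) * D)
    by (unfold D, rho, C; field; lra).
  pose proof (main_induct nS nA P pi Rw beta HP0 HP1 HR Hbeta Hpi0 Hpi1 lam Vpi n eps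
     HVpi Hlam_pos Hlam_sum Hlam_stat Hn Heps0 Heps1 rho D) as HM.
  specialize (HM ltac:(lra) Hc HD k V0).
  assert (HT : 8 / (1 - bn) * ((1 - bn) ^ 2 / (1 - beta) ^ 2 + 2 * bn ^ 2 * N2) * eps = 4 * D)
    by (unfold D, C, Kb; field; lra).
  rewrite HT.
  assert (0 <= rho ^ k) by (apply pow_le; lra).
  assert ((1 - rho ^ k) * D <= D) by nra.
  lra.
Qed.
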